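(* Let $G$ be a finitely generated group, $N$ a characteristic subgroup of $G$, and $Q=G/N$. Then $\alpha_Q\preccurlyeq\alpha_G$.
   Context: For a finitely generated group $G$ with finite generating set $\Sigma$, the automorphic growth function sends $n$ to the number of $\operatorname{Aut}(G)$-orbits of $G$ containing an element of word length at most $n$; $\alpha_G$ denotes its class under $\sim$ (independent of $\Sigma$). For non-decreasing non-zero $f,g\colon\mathbb{N}\to\mathbb{N}$, $f\preccurlyeq g$ means there is $\lambda\in\mathbb{N}\setminus\{0\}$ with $f(n)\le\lambda g(\lambda n+\lambda)+\lambda$ for all $n$, and $f\sim g$ means both $f\preccurlyeq g$ and $g\preccurlyeq f$; $\preccurlyeq$ induces a partial order on $\sim$-classes. *)

(* Defs.v *)
From Stdlib Require Import List Arith ClassicalEpsilon.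
Import ListNotations.

Record Grp := {
  carrier :> Type;
  gmul : carrier -> carrier -> carrier;
  gone : carrier;
  ginv : carrier -> carrier;
  gmul_assoc : forall x y z, gmul x (gmul y z) = gmul (gmul x y) z;
  gmul_1l : forall x, gmul gone x = x;
  gmul_Vl : forall x, gmul (ginv x) x = gone
}.

Arguments gmul {g}.
Arguments gone {g}.
Arguments ginv {g}.

(* A word over S ∪ S^{-1}: letters (true, s) = s, (false, s) = s^{-1}. *)
Definition letter_val {G : Grp} (p : bool * G) : G :=
  if fst p then snd p else ginv (snd p).

Fixpoint word_val {G : Grp} (w : list (bool * G)) : G :=
  match w with
  | [] => gone
  | p :: w' => gmul (letter_val p) (word_val w')
  end.

Definition in_ball {G : Grp} (S : list G) (n : nat) (g : G) : Prop :=
  exists w : list (bool * G),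
    length w <= n /\ Forall (fun p => In (snd p) S) w /\ word_val w = g.

Definition generates {G : Grp} (S : list G) : Prop :=
  forall g : G, exists n, in_ball S n g.

Definition finitely_generated (G : Grp) : Prop :=
  exists S : list G, generates S.

Definition is_hom {G H : Grp} (f : G -> H) : Prop :=
  forall x y, f (gmul x y) = gmul (f x) (f y).

Definition is_aut {G : Grp} (f : G -> G) : Prop :=
  is_hom f /\ (forall x y, f x = f y -> x = y) /\ (forall y, exists x, f x = y).

Definition aut_equiv {G : Grp} (x y : G) : Prop :=
  exists f : G -> G, is_aut f /\ f x = y.

Definition orbit_reps {G : Grp} (S : list G) (n : nat) (l : list G) : Prop :=
  (forall x, In x l -> in_ball S n x) /\
  (forall i j, i < length l -> j < length l ->
     aut_equiv (nth i l gone) (nth j l gone) -> i = j) /\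
  (forall g, in_ball S n g -> exists x, In x l /\ aut_equiv g x).

Definition aut_growth {G : Grp} (S : list G) (n : nat) : nat :=
  epsilon (inhabits 0) (fun k => exists l, orbit_reps S n l /\ length l = k).

Definition dom_le (f g : nat -> nat) : Prop :=
  exists lam : nat, lam <> 0 /\
    forall n, f n <= lam * g (lam * n + lam) + lam.

Definition dom_equiv (f g : nat -> nat) : Prop := dom_le f g /\ dom_le g f.

Definition is_subgroup {G : Grp} (N : G -> Prop) : Prop :=
  N gone /\ (forall x y, N x -> N y -> N (gmul x y)) /\ (forall x, N x -> N (ginv x)).

Definition characteristic {G : Grp} (N : G -> Prop) : Prop :=
  is_subgroup N /\
  forall f : G -> G, is_aut f -> forall y, N y <-> exists x, N x /\ f x = y.

Definition is_quotient_map {G Q : Grp} (N : G -> Prop) (pi : G -> Q) : Prop :=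
  is_hom pi /\ (forall q, exists g, pi g = q) /\ (forall g, pi g = gone <-> N g).

(* Main.v *)
Require Import Defs.
From Stdlib Require Import List Arith Lia ClassicalEpsilon Classical.
Import ListNotations.

Section GrpLemmas.
Variable G : Grp.

Lemma mul_Vr (x : G) : gmul x (ginv x) = gone.
Proof.
  assert (yy : gmul (gmul x (ginv x)) (gmul x (ginv x)) = gmul x (ginv x)).
  { rewrite <- gmul_assoc, (gmul_assoc G (ginv x) x), gmul_Vl, gmul_1l. reflexivity. }
  set (y := gmul x (ginv x)) in *.
  transitivity (gmul (ginv y) (gmul y y)).
  - rewrite gmul_assoc, gmul_Vl, gmul_1l. reflexivity.
  - rewrite yy. apply gmul_Vl.
Qed.

Lemma mul_1r (x : G) : gmul x gone = x.
Proof. rewrite <- (gmul_Vl G x), gmul_assoc, mul_Vr, gmul_1l. reflexivity. Qed.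

Lemma inv_uniq (a b : G) : gmul a b = gone -> b = ginv a.
Proof.
  intro H. rewrite <- (gmul_1l G b), <- (gmul_Vl G a), <- gmul_assoc, H, mul_1r.
  reflexivity.
Qed.

Lemma inv_inv (x : G) : ginv (ginv x) = x.
Proof. symmetry. apply inv_uniq, gmul_Vl. Qed.

Lemma inv_mul (x y : G) : ginv (gmul x y) = gmul (ginv y) (ginv x).
Proof.
  symmetry. apply inv_uniq.
  rewrite gmul_assoc, <- (gmul_assoc G x y), mul_Vr, mul_1r, mul_Vr. reflexivity.
Qed.

Lemma cancel_l (a x y : G) : gmul a x = gmul a y -> x = y.
Proof.
  intro H. rewrite <- (gmul_1l G x), <- (gmul_1l G y), <- (gmul_Vl G a),
    <- !gmul_assoc, H. reflexivity.
Qed.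

Lemma Vmul_eq1 (u v : G) : gmul (ginv u) v = gone <-> u = v.
Proof.
  split.
  - intro H. apply inv_uniq in H. rewrite inv_inv in H. auto.
  - intros ->. apply gmul_Vl.
Qed.

Lemma word_val_app (w1 w2 : list (bool * G)) :
  word_val (w1 ++ w2) = gmul (word_val w1) (word_val w2).
Proof.
  induction w1 as [|p w1 IH]; simpl.
  - rewrite gmul_1l. auto.
  - rewrite IH, gmul_assoc. auto.
Qed.

Definition flip (p : bool * G) : bool * G := (negb (fst p), snd p).

Lemma word_val_inv (w : list (bool * G)) :
  word_val (rev (map flip w)) = ginv (word_val w).
Proof.
  induction w as [|p w IH]; simpl.
  - apply inv_uniq. apply gmul_1l.
  - rewrite word_val_app, IH, inv_mul. simpl. rewrite mul_1r.
    f_equal. destruct p as [[|] s]; unfold letter_val; simpl; auto.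
    rewrite inv_inv; auto.
Qed.

Lemma ball_mono (S : list G) n m g : n <= m -> in_ball S n g -> in_ball S m g.
Proof. intros H [w [H1 [H2 H3]]]. exists w. repeat split; auto. lia. Qed.

Lemma ball_mul (S : list G) n m x y :
  in_ball S n x -> in_ball S m y -> in_ball S (n + m) (gmul x y).
Proof.
  intros [w1 [A1 [B1 C1]]] [w2 [A2 [B2 C2]]]. exists (w1 ++ w2).
  rewrite length_app, word_val_app, Forall_app. subst. repeat split; auto. lia.
Qed.

Lemma ball_inv (S : list G) n x : in_ball S n x -> in_ball S n (ginv x).
Proof.
  intros [w [A [B C]]]. exists (rev (map flip w)).
  rewrite length_rev, length_map, word_val_inv, C. repeat split; auto.
  apply Forall_rev. apply Forall_map. eapply Forall_impl; [|exact B].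
  intros [b s]; simpl; auto.
Qed.

Lemma aut_refl (x : G) : aut_equiv x x.
Proof.
  exists (fun y => y). repeat split; eauto.
Qed.

Lemma aut_trans (x y z : G) : aut_equiv x y -> aut_equiv y z -> aut_equiv x z.
Proof.
  intros [f [[Hf [Hi Hs]] E1]] [g [[Hg [Gi Gs]] E2]].
  exists (fun a => g (f a)). split; [|subst; auto].
  repeat split.
  - intros a b. rewrite Hf, Hg. auto.
  - intros a b H. auto.
  - intro c. destruct (Gs c) as [b Hb]. destruct (Hs b) as [a Ha].
    exists a. subst; auto.
Qed.

Lemma aut_sym (x y : G) : aut_equiv x y -> aut_equiv y x.
Proof.
  intros [f [[Hf [Hi Hs]] E]].
  set (g := fun b => epsilon (inhabits gone) (fun a => f a = b)).
  assert (Hg : forall b, f (g b) = b).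
  { intro b. unfold g. apply epsilon_spec. apply Hs. }
  exists g. repeat split.
  - intros a b. apply Hi. rewrite Hf, !Hg. auto.
  - intros a b H. rewrite <- (Hg a), <- (Hg b), H. auto.
  - intro a. exists (f a). apply Hi. rewrite Hg. auto.
  - apply Hi. rewrite Hg. auto.
Qed.

End GrpLemmas.

Lemma hom_one {G H : Grp} (f : G -> H) : is_hom f -> f gone = gone.
Proof.
  intro Hf. apply (cancel_l H (f gone)). rewrite <- Hf, gmul_1l, mul_1r. auto.
Qed.

Lemma hom_inv {G H : Grp} (f : G -> H) x : is_hom f -> f (ginv x) = ginv (f x).
Proof.
  intro Hf. apply inv_uniq. rewrite <- Hf, !mul_Vr. apply hom_one; auto.
Qed.



Arguments flip {G}.

Fixpoint words {G : Grp} (S : list G) (n : nat) : list (list (bool * G)) :=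
  match n with
  | 0 => [[]]
  | Datatypes.S n => [] :: flat_map (fun p => map (cons p) (words S n))
                                    (list_prod [true; false] S)
  end.

Lemma words_spec {G : Grp} (S : list G) n w :
  In w (words S n) <-> length w <= n /\ Forall (fun p => In (snd p) S) w.
Proof.
  revert w; induction n as [|n IH]; intro w; cbn [words].
  - split.
    + intros [<-|[]]. simpl; auto.
    + intros [H _]. destruct w; simpl in *; [auto|lia].
  - split.
    + intros [<-|H]. simpl; split; [lia|auto].
      apply in_flat_map in H. destruct H as [[b s] [Hp Hw]].
      apply in_map_iff in Hw. destruct Hw as [w' [<- Hw']].
      apply IH in Hw'. destruct Hw'. apply in_prod_iff in Hp.
      simpl. split; [lia|]. constructor; simpl; tauto.
    + intros [Hl HF]. destruct w as [|[b s] w']; [left; reflexivity|right].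
      apply in_flat_map. exists (b, s). split.
      * apply in_prod_iff. split; [destruct b; simpl; auto|].
        apply Forall_inv in HF. auto.
      * apply in_map. apply IH. simpl in Hl. split; [lia|].
        apply Forall_inv_tail in HF. auto.
Qed.

Lemma ball_list {G : Grp} (S : list G) n :
  exists L : list G, forall g, in_ball S n g <-> In g L.
Proof.
  exists (map word_val (words S n)). intro g. split.
  - intros [w [A [B C]]]. subst. apply in_map. apply words_spec; auto.
  - intro H. apply in_map_iff in H. destruct H as [w [<- Hw]].
    apply words_spec in Hw. exists w. tauto.
Qed.

Lemma greedy {A : Type} (R : A -> A -> Prop)
  (Rrefl : forall x, R x x) (Rsym : forall x y, R x y -> R y x) (L : list A) :
  exists l, incl l L /\ NoDup l /\
    (forall x y, In x l -> In y l -> R x y -> x = y) /\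
    (forall y, In y L -> exists x, In x l /\ R y x).
Proof.
  induction L as [|a L IH].
  - exists []. repeat split; auto.
    + intros x []. + constructor. + intros x y []. + intros y [].
  - destruct IH as [l [I [N [P C]]]].
    destruct (classic (exists x, In x l /\ R a x)) as [E|NE].
    + exists l. repeat split; auto.
      * intros x Hx. right. auto.
      * intros y [<-|Hy]; auto.
    + exists (a :: l). repeat split.
      * intros x [<-|Hx]; [left; auto|right; auto].
      * constructor; auto; try (intro Ha; apply NE; exists a; auto).
      * intros x y [Ex|Hx] [Ey|Hy] Hr; subst; auto;
          exfalso; apply NE; eauto.
      * intros y [Ey|Hy].
        -- exists a. split; [left; reflexivity| rewrite <- Ey; auto].
        -- destruct (C y Hy) as [x [Hx Hr]]. exists x. split; [right|]; auto.
Qed.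

Lemma reps_exist {G : Grp} (S : list G) n : exists l, orbit_reps S n l.
Proof.
  destruct (ball_list S n) as [L HL].
  destruct (greedy (@aut_equiv G) (aut_refl G) (aut_sym G) L) as [l [I [N [P C]]]].
  exists l. split; [|split].
  - intros x Hx. apply HL. auto.
  - intros i j Hi Hj He. apply (NoDup_nth l gone); auto.
    apply P; auto; apply nth_In; auto.
  - intros g Hg. apply C. apply HL. auto.
Qed.

Lemma aut_growth_spec {G : Grp} (S : list G) n :
  exists l, orbit_reps S n l /\ length l = aut_growth S n.
Proof.
  unfold aut_growth. apply epsilon_spec.
  destruct (reps_exist S n) as [l Hl]. exists (length l), l. auto.
Qed.

Lemma reps_distinct {G : Grp} (S : list G) n l x y :
  orbit_reps S n l -> In x l -> In y l -> aut_equiv x y -> x = y.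
Proof.
  intros [_ [D _]] Hx Hy He.
  destruct (In_nth l x gone Hx) as [i [Hi Ei]].
  destruct (In_nth l y gone Hy) as [j [Hj Ej]].
  subst. f_equal. apply D; auto.
Qed.

Lemma reps_nodup {G : Grp} (S : list G) n l : orbit_reps S n l -> NoDup l.
Proof.
  intros [_ [D _]]. apply (NoDup_nth l gone). intros i j Hi Hj E.
  apply D; auto. rewrite E. apply aut_refl.
Qed.

Lemma counting {G Q : Grp} (pi : G -> Q) (S : list G) (T : list Q) n m lT lS :
  orbit_reps T n lT -> orbit_reps S m lS ->
  (forall x, in_ball T n x -> exists g, in_ball S m g /\ pi g = x) ->
  (forall a b, aut_equiv a b -> aut_equiv (pi a) (pi b)) ->
  length lT <= length lS.
Proof.
  intros RT RS Hlift Hpi.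
  set (h := fun x => epsilon (inhabits gone) (fun y => In y lS /\ aut_equiv x (pi y))).
  assert (Hh : forall x, In x lT -> In (h x) lS /\ aut_equiv x (pi (h x))).
  { intros x Hx. unfold h. apply epsilon_spec.
    destruct RT as [B _]. destruct (Hlift x (B x Hx)) as [g [Hg <-]].
    destruct RS as [_ [_ C]]. destruct (C g Hg) as [y [Hy E]].
    exists y. split; auto. }
  rewrite <- (length_map h lT). apply NoDup_incl_length.
  - apply NoDup_map_NoDup_ForallPairs; [|eapply reps_nodup; eauto].
    intros a b Ha Hb E. eapply reps_distinct; eauto.
    destruct (Hh a Ha) as [_ E1]. destruct (Hh b Hb) as [_ E2].
    rewrite E in E1. eapply aut_trans; eauto. apply aut_sym; auto.
  - intros y Hy. apply in_map_iff in Hy. destruct Hy as [x [<- Hx]].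
    apply Hh; auto.
Qed.

Lemma induced_aut {G Q : Grp} (N : G -> Prop) (pi : G -> Q) :
  characteristic N -> is_quotient_map N pi ->
  forall a b, aut_equiv a b -> aut_equiv (pi a) (pi b).
Proof.
  intros [_ Hch] [Hpi [Hsurj Hker]] a b [f [Hf E]].
  pose proof Hf as [Hfh [Hfi Hfs]].
  assert (Eq : forall u v, pi u = pi v <-> N (gmul (ginv u) v)).
  { intros u v. rewrite <- Hker, Hpi, hom_inv by auto. symmetry. apply Vmul_eq1. }
  assert (NF : forall x, N (f x) <-> N x).
  { intro x. rewrite (Hch f Hf (f x)). split.
    - intros [x' [Hx' E']]. apply Hfi in E'. subst; auto.
    - intro Hx. exists x. auto. }
  assert (WD : forall u v, pi (f u) = pi (f v) <-> pi u = pi v).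
  { intros u v. rewrite !Eq, <- hom_inv, <- Hfh by auto. apply NF. }
  set (F := fun q => pi (f (epsilon (inhabits gone) (fun g => pi g = q)))).
  assert (HF : forall g, F (pi g) = pi (f g)).
  { intro g. unfold F. apply WD. apply (epsilon_spec (inhabits gone) (fun g0 => pi g0 = pi g)).
    exists g; auto. }
  exists F. repeat split.
  - intros q1 q2. destruct (Hsurj q1) as [g1 <-]. destruct (Hsurj q2) as [g2 <-].
    rewrite <- Hpi, !HF, Hfh, Hpi. auto.
  - intros q1 q2. destruct (Hsurj q1) as [g1 <-]. destruct (Hsurj q2) as [g2 <-].
    rewrite !HF. apply WD.
  - intro q. destruct (Hsurj q) as [g <-]. destruct (Hfs g) as [x <-].
    exists (pi x). apply HF.
  - rewrite HF, E. auto.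
Qed.

Theorem mainTheorem13 (G Q : Grp) (N : G -> Prop) (pi : G -> Q)
  (S : list G) (T : list Q) :
  finitely_generated G ->
  characteristic N ->
  is_quotient_map N pi ->
  generates S -> generates T ->
  dom_le (aut_growth T) (aut_growth S).
Proof.
  intros _ Hch Hq HS HT.
  pose proof Hq as [Hpi [Hsurj Hker]].
  assert (Hc : exists c, forall t, In t T -> exists g, in_ball S c g /\ pi g = t).
  { clear HT. induction T as [|t T IH].
    - exists 0. intros t [].
    - destruct IH as [c Hc]. destruct (Hsurj t) as [g Hg].
      destruct (HS g) as [k Hk]. exists (Nat.max k c).
      intros t' [<-|Ht'].
      + exists g. split; auto. eapply ball_mono; [|eauto]. lia.
      + destruct (Hc t' Ht') as [g' [Hg' E]]. exists g'. split; auto.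
        eapply ball_mono; [|eauto]. lia. }
  destruct Hc as [c Hc].
  assert (Hlift : forall w : list (bool * Q), Forall (fun p => In (snd p) T) w ->
     exists g, in_ball S (c * length w) g /\ pi g = word_val w).
  { induction w as [|[b t] w IH]; intro HF; simpl.
    - exists gone. split.
      + exists []. simpl. repeat split; auto. lia.
      + apply hom_one; auto.
    - destruct (IH (Forall_inv_tail HF)) as [g [Hg E]].
      pose proof (Forall_inv HF) as Ht. simpl in Ht.
      destruct (Hc t Ht) as [h [Hh Eh]].
      assert (Hl : exists h', in_ball S c h' /\ pi h' = letter_val (b, t)).
      { destruct b; simpl.
        - exists h; auto.
        - exists (ginv h). split; [apply ball_inv; auto|].
          rewrite hom_inv, Eh; auto. }
      destruct Hl as [h' [Hh' Eh']]. exists (gmul h' g). split.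
      + replace (c * Datatypes.S (length w)) with (c + c * length w) by lia.
        apply ball_mul; auto.
      + rewrite Hpi, Eh', E. auto. }
  exists (Datatypes.S c). split; [lia|]. intro n.
  destruct (aut_growth_spec T n) as [lT [RT ET]].
  destruct (aut_growth_spec S (Datatypes.S c * n + Datatypes.S c)) as [lS [RS ES]].
  assert (length lT <= length lS).
  { eapply (counting pi S T); eauto.
    - intros x [w [A [B C]]]. destruct (Hlift w B) as [g [Hg E]].
      exists g. split; [|congruence]. eapply ball_mono; [|eauto]. nia.
    - eapply induced_aut; eauto. }
  rewrite <- ET, <- ES. nia.
Qed.
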